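(* Let $K$ be a field of characteristic $p>0$ with algebraic closure $\overline{K}$, let $q$ be a power of $p$, and let $a\in K^{{\mathbb N}}$ be given by $a(n)=\sum_{i=1}^d\beta_i\alpha_i^n$ ($n\in{\mathbb N}$) with $\alpha_1,\dots,\alpha_d,\beta_1,\dots,\beta_d\in\overline{K}$. Let $c_0,c_1,\dots,c_r\in{\mathbb Z}$ (the $\alpha_i$ being nonzero whenever negative exponents occur). If $$\sum_{i=1}^d(\beta_i\alpha_i^{c_0})\otimes\alpha_i^{c_1}\otimes\cdots\otimes\alpha_i^{c_r}=0$$ in the $(r+1)$-fold tensor product $\overline{K}\otimes_{{\mathbb F}_q}\overline{K}\otimes_{{\mathbb F}_q}\cdots\otimes_{{\mathbb F}_q}\overline{K}$, then $S_q(c_0;c_1,\dots,c_r)\subseteq{\mathcal Z}(a)$.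
   Context: ${\mathbb N}=\{0,1,2,\dots\}$, ${\mathcal Z}(a)=\{n\in{\mathbb N}\mid a(n)=0\}$, and $S_q(c_0;c_1,\dots,c_r)=\{c_0+c_1q^{k_1}+\cdots+c_rq^{k_r}\mid k_1,\dots,k_r\in{\mathbb N}\}\cap{\mathbb N}$. *)

(* Defs.v *)
From HB Require Import structures.
From mathcomp Require Import all_boot all_order all_algebra.
Set Implicit Arguments. Unset Strict Implicit. Unset Printing Implicit Defensive.
Import Order.TTheory GRing.Theory Num.Theory.
Local Open Scope ring_scope.

Definition upd (L : Type) (m : nat) (x : {ffun 'I_m -> L}) (j : 'I_m) (y : L)
  : {ffun 'I_m -> L} := [ffun k => if k == j then y else x k].

(* Membership in F_q, viewed as the subfield {c | c^q = c} of L. *)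
Definition inFq (L : fieldType) (q : nat) (c : L) : bool := c ^+ q == c.

Definition multiadditive (L : fieldType) (W : zmodType) (m : nat)
  (M : {ffun 'I_m -> L} -> W) : Prop :=
  forall (x : {ffun 'I_m -> L}) (j : 'I_m) (y z : L),
    M (upd x j (y + z)) = M (upd x j y) + M (upd x j z).

Definition Fq_balanced (L : fieldType) (q : nat) (W : zmodType) (m : nat)
  (M : {ffun 'I_m -> L} -> W) : Prop :=
  forall (c : L), inFq q c -> forall (x : {ffun 'I_m -> L}) (j k : 'I_m),
    M (upd x j (c * x j)) = M (upd x k (c * x k)).

(* sum_{i in I} x_i(0) (x) ... (x) x_i(m-1) = 0 in the m-fold tensor product
   L (x)_{F_q} ... (x)_{F_q} L, stated via the universal property of the tensor
   product: every F_q-multilinear map (multiadditive + F_q-balanced, into an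
   abelian group) kills it. *)
Definition tensor_sum_zero (L : fieldType) (q : nat) (I : finType) (m : nat)
  (x : I -> {ffun 'I_m -> L}) : Prop :=
  forall (W : zmodType) (M : {ffun 'I_m -> L} -> W),
    multiadditive M -> Fq_balanced q M -> \sum_(i : I) M (x i) = 0.

Definition tensor_factors (L : fieldType) (r : nat) (alpha beta : L)
  (c0 : int) (c : 'I_r -> int) : {ffun 'I_r.+1 -> L} :=
  [ffun j => match unlift ord0 j with
             | None => beta * alpha ^ c0
             | Some j' => alpha ^ (c j')
             end].

Definition Sq (q : nat) (r : nat) (c0 : int) (c : 'I_r -> int) (n : nat) : Prop :=
  exists k : 'I_r -> nat, (n%:Z = c0 + \sum_(j < r) c j * (q ^ k j)%:Z)%R.

(* Main.v *)
Require Import Defs.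
From HB Require Import structures.
From mathcomp Require Import all_boot all_order all_algebra.
Import Order.TTheory GRing.Theory Num.Theory.
Local Open Scope ring_scope.

Lemma pow_sum (F : fieldType) (x : F) r (f : 'I_r -> int) :
  (x != 0) \/ (forall j, 0 <= f j) -> x ^ (\sum_j f j) = \prod_j x ^ f j.
Proof.
case=> [nz|pos].
  by rewrite (big_morph (fun m => x ^ m) (fun a b => expfzDr a b nz) (expr0z x)).
suff [] : 0 <= \sum_j f j /\ x ^ (\sum_j f j) = \prod_j x ^ f j by [].
elim/big_rec2: _ => [|j s pr _ [s0 <-]]; first by rewrite expr0z.
split; first by rewrite addr_ge0 ?pos.
by rewrite exprzD_ss // pos s0.
Qed.

Theorem proposition3p1 (K : fieldType) (L : closedFieldType)
  (iota : {rmorphism K -> L}) (p e d r : nat)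
  (alpha beta : 'I_d -> L) (a : nat -> K) (c0 : int) (c : 'I_r -> int) :
  p \in [pchar K] ->
  (forall x : L, algebraicOver iota x) ->
  (0 < e)%N ->
  (forall n : nat, iota (a n) = \sum_(i < d) beta i * alpha i ^+ n) ->
  ((c0 < 0) \/ (exists j, c j < 0) -> forall i, alpha i != 0) ->
  tensor_sum_zero (p ^ e) (fun i : 'I_d => tensor_factors (alpha i) (beta i) c0 c) ->
  forall n : nat, Sq (p ^ e) c0 c n -> a n = 0.
Proof.
move=> Hp _ e0 Ha Hnz Ht n [k Hn].
have HpL : p \in [pchar L] := rmorph_pchar iota Hp.
apply: (fmorph_inj iota); rewrite rmorph0 Ha.
pose kk (j : 'I_r.+1) := if unlift ord0 j is Some j' then k j' else 0%N.
pose M (x : {ffun 'I_r.+1 -> L}) := \prod_(j < r.+1) x j ^+ ((p ^ e) ^ kk j).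
have Hfrob : forall m (y z : L),
    (y + z) ^+ ((p ^ e) ^ m) = y ^+ ((p ^ e) ^ m) + z ^+ ((p ^ e) ^ m).
  move=> m y z; apply: exprDn_pchar.
  rewrite (eq_pnat _ (pcharf_eq HpL)) -expnM pnatX pnat_id //.
  exact: pcharf_prime HpL.
have HM : forall x j, M x = x j ^+ ((p ^ e) ^ kk j)
    * \prod_(i < r.+1 | i != j) x i ^+ ((p ^ e) ^ kk i).
  by move=> x j; rewrite /M (bigD1 j).
have Hupd : forall x j y, M (upd x j y) = y ^+ ((p ^ e) ^ kk j)
    * \prod_(i < r.+1 | i != j) x i ^+ ((p ^ e) ^ kk i).
  move=> x j y; rewrite (HM _ j) /upd ffunE eqxx; congr (_ * _).
  by apply: eq_bigr => i /negbTE ij; rewrite ffunE ij.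
have Hma : multiadditive M by move=> x j y z; rewrite !Hupd Hfrob mulrDl.
have HFq : forall c : L, inFq (p ^ e) c -> forall m, c ^+ ((p ^ e) ^ m) = c.
  move=> c' /eqP hc; elim=> [|m IH]; first by rewrite expr1.
  by rewrite expnSr exprM IH hc.
have Hbal : Fq_balanced (p ^ e) M.
  by move=> c' hc x j k'; rewrite !Hupd !exprMn !(HFq c' hc) -!mulrA -!HM.
move: (Ht L M Hma Hbal) => H0; rewrite -[RHS]H0; apply: eq_bigr => i _.
rewrite /M big_ord_recl ffunE /kk unlift_none expn0 expr1 -mulrA; congr (_ * _).
under eq_bigr => j _ do rewrite ffunE liftK exprnP exprz_exp.
rewrite exprnP Hn.
have [nz|] := boolP (alpha i != 0).
  by rewrite expfzDr // pow_sum; [|left].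
move/negbNE/eqP => a0.
have Hc0 : 0 <= c0.
  rewrite leNgt; apply/negP => h; move: (Hnz (or_introl h) i); by rewrite a0 eqxx.
have Hcj : forall j, 0 <= c j * ((p ^ e) ^ k j)%:Z.
  move=> j; rewrite mulr_ge0 // leNgt; apply/negP => h.
  by move: (Hnz (or_intror (ex_intro _ j h)) i); rewrite a0 eqxx.
rewrite exprzD_ss; last by rewrite Hc0 sumr_ge0.
by rewrite pow_sum; [|right].
Qed.
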